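(* Let $k$ be a positive integer, and $G$ an edge-colored graph of order $n\geq 105k-24$ such that $|CN(u)\cup CN(v)|\geq n-1$ for every pair of vertices $u$ and $v$ in $V(G)$. Then $G$ contains $k$ (distinct) rainbow $C_4$'s.
   Context: An edge-colored graph is a finite simple graph $G$ with a map $C:E(G)\to\mathbb{N}$. For $v\in V(G)$, the color neighborhood $CN(v)$ is the set of colors assigned to edges incident to $v$. A subgraph is rainbow if all its edges have distinct colors; $C_4$ denotes a cycle of length 4. *)

(* Defs.v *)
From mathcomp Require Import all_boot.
Set Implicit Arguments. Unset Strict Implicit. Unset Printing Implicit Defensive.

(* An edge coloring is C : T -> T -> nat, where only the
   values C u v with e u v matter, and C u v = C v u on edges. *)
Definition simple_graph (T : finType) (e : rel T) : Prop :=
  irreflexive e /\ symmetric e.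

Definition edge_coloring (T : finType) (e : rel T) (C : T -> T -> nat) : Prop :=
  forall u v, e u v -> C u v = C v u.

Definition CN (T : finType) (e : rel T) (C : T -> T -> nat) (v : T) : seq nat :=
  undup [seq C v u | u <- enum T & e v u].

Definition CN_union_card (T : finType) (e : rel T) (C : T -> T -> nat) (u v : T) : nat :=
  size (undup (CN e C u ++ CN e C v)).

Definition C4_edges (T : finType) (a b c d : T) : {set {set T}} :=
  [set [set a; b]; [set b; c]; [set c; d]; [set d; a]].

Definition rainbow_C4 (T : finType) (e : rel T) (C : T -> T -> nat)
    (S : {set {set T}}) : Prop :=
  exists a b c d : T,
    uniq [:: a; b; c; d] /\
    [&& e a b, e b c, e c d & e d a] /\
    uniq [:: C a b; C b c; C c d; C d a] /\
    S = C4_edges a b c d.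

(* Main.v *)
Require Import Defs.
From mathcomp Require Import all_boot zify.
Set Implicit Arguments. Unset Strict Implicit. Unset Printing Implicit Defensive.

Definition rc4 (T : finType) (e : rel T) (C : T -> T -> nat) (a b c d : T) : bool :=
  [&& uniq [:: a; b; c; d], [&& e a b, e b c, e c d & e d a] &
      uniq [:: C a b; C b c; C c d; C d a]].

Lemma mem_CN (T : finType) (e : rel T) (C : T -> T -> nat) v c :
  (c \in CN e C v) = [exists x, e v x && (C v x == c)].
Proof.
rewrite /CN mem_undup; apply/mapP/existsP.
  by case=> x; rewrite mem_filter mem_enum andbT => Hx ->; exists x; rewrite Hx eqxx.
by case=> x /andP[Hx /eqP <-]; exists x; rewrite // mem_filter mem_enum Hx.
Qed.

Lemma size_filter_notin (s l : seq nat) : uniq s ->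
  size s - size l <= size (filter (fun c => c \notin l) s).
Proof.
move=> Us.
have H1 := count_predC (fun c => c \in l) s.
have H2 : count (fun c => c \in l) s <= size l.
  rewrite -size_filter; apply: uniq_leq_size; first exact: filter_uniq.
  by move=> x; rewrite mem_filter => /andP[].
rewrite size_filter.
have -> : count (fun c => c \notin l) s = count (predC (fun c => c \in l)) s by [].
move: H1 H2; rewrite /predC /=. lia.
Qed.

Lemma size_undup_sub (s1 s2 : seq nat) : {subset s1 <= s2} ->
  size (undup s1) <= size s2.
Proof.
move=> H; apply: leq_trans (size_undup s2).
apply: uniq_leq_size; first exact: undup_uniq.
by move=> x; rewrite !mem_undup; apply: H.
Qed.

Lemma edge_neq (T : finType) (e : rel T) a b : simple_graph e -> e a b -> a != b.
Proof. by case=> Hirr _ Hab; apply/eqP => E; move: Hab; rewrite E Hirr. Qed.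

Lemma KI (T : finType) (e : rel T) (C : T -> T -> nat) u w x y :
  simple_graph e -> edge_coloring e C ->
  (forall a b c d, ~~ rc4 e C a b c d) ->
  u != w -> e u x -> e w x -> e u y -> e w y -> x != y ->
  C u x != C w x -> C u y != C w y ->
  [|| C u x == C u y, C u x == C w y, C w x == C u y | C w x == C w y].
Proof.
move=> Hs Hc NR uw ux wx uy wy xy nx ny.
have := NR u x w y; rewrite /rc4.
have [_ Hsym] := Hs.
have xw : e x w by rewrite Hsym.
have yu : e y u by rewrite Hsym.
rewrite ux xw wy yu /=.
rewrite -(Hc _ _ wx) (Hc _ _ uy).
have nux := edge_neq Hs ux. have nwx := edge_neq Hs wx.
have nuy := edge_neq Hs uy. have nwy := edge_neq Hs wy.
rewrite (Hc _ _ uy) in ny.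
rewrite !inE [x == w]eq_sym [C w y == C y u]eq_sym (negbTE nux) (negbTE uw) (negbTE nuy) (negbTE nwx) (negbTE xy) (negbTE nwy) (negbTE nx) (negbTE ny) /=.
by case: (C u x == C w y); case: (C u x == C y u); case: (C w x == C w y); case: (C w x == C y u).
Qed.

Definition col (T : finType) (e : rel T) (C : T -> T -> nat) (u w x : T) : seq nat :=
  (if e u x then [:: C u x] else [::]) ++ (if e w x then [:: C w x] else [::]).

Lemma UB (T : finType) (e : rel T) (C : T -> T -> nat) u w (ys : seq T) :
  simple_graph e -> edge_coloring e C ->
  (forall a b c d, ~~ rc4 e C a b c d) -> u != w ->
  size (undup (flatten (map (col e C u w) ys))) <= size ys + 2.
Proof.
move=> Hs Hc NR uw.
pose nl x := [&& e u x, e w x & C u x != C w x].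
case: (boolP (has nl ys)) => [/hasP[x0 x0in /and3P[ux0 wx0 n0]] | Hno].
  pose r y := if e u y && (C u y \notin [:: C u x0; C w x0]) then C u y
              else if e w y then C w y else C u y.
  have Hsub : {subset flatten (map (col e C u w) ys) <= C u x0 :: C w x0 :: map r ys}.
    move=> c /flattenP[s /mapP[y yin ->]] cin.
    suff : c \in [:: C u x0; C w x0; r y].
      by rewrite !inE => /or3P[->|->|/eqP->]; rewrite ?orbT // (map_f r yin) !orbT.
    have Cl1 : e u y -> C u y \in [:: C u x0; C w x0; r y].
      move=> uy; case: (boolP (C u y \in [:: C u x0; C w x0])).
        by rewrite !inE => /orP[->|->]; rewrite ?orbT.
      by move=> Hm; rewrite /r uy Hm /= !inE eqxx !orbT.
    have Cl2 : e w y -> C w y \in [:: C u x0; C w x0; r y].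
      move=> wy; case: (boolP (e u y && (C u y \notin [:: C u x0; C w x0]))) => Hb.
        have ry : r y = C u y by rewrite /r Hb.
        rewrite ry.
        case/andP: Hb => uy Hm.
        case: (eqVneq (C u y) (C w y)) => [<-|ny]; first by rewrite !inE eqxx !orbT.
        have yx0 : x0 != y.
          apply/eqP => E; move: Hm; rewrite -E !inE eqxx //.
        have := KI Hs Hc NR uw ux0 wx0 uy wy yx0 n0 ny.
        move: Hm; rewrite !inE negb_or => /andP[/negbTE h1 /negbTE h2].
        rewrite [C u x0 == _]eq_sym h1 [C w x0 == C u y]eq_sym h2 /=.
        by case/orP => /eqP ->; rewrite eqxx ?orbT.
      have ry : r y = C w y by rewrite /r (negbTE Hb) wy.
      by rewrite ry !inE eqxx !orbT.
    case uy: (e u y); case wy: (e w y); rewrite /col uy wy /= ?inE ?orbF in cin.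
    - by case/orP: cin => /eqP ->; [apply: Cl1 | apply: Cl2].
    - by move/eqP: cin ->; apply: Cl1.
    - by move/eqP: cin ->; apply: Cl2.
    - by [].
  apply: leq_trans (size_undup_sub Hsub) _.
  by rewrite /= size_map addnC.
pose r y := if e u y then C u y else C w y.
have Hsub : {subset flatten (map (col e C u w) ys) <= map r ys}.
  move=> c /flattenP[s /mapP[y yin ->]] cin.
  have ryin : r y \in map r ys by apply: map_f.
  case uy: (e u y); case wy: (e w y); rewrite /col uy wy /= ?inE ?orbF in cin.
  - have : ~~ nl y by apply: (contra _ Hno) => Hy; apply/hasP; exists y.
    rewrite /nl uy wy /= negbK => /eqP E.
    have ry : r y = C u y by rewrite /r uy.
    by case/orP: cin => /eqP ->; rewrite -?E -ry.
  - have ry : r y = C u y by rewrite /r uy.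
    by move/eqP: cin ->; rewrite -ry.
  - have ry : r y = C w y by rewrite /r uy.
    by move/eqP: cin ->; rewrite -ry.
  - by [].
apply: leq_trans (size_undup_sub Hsub) _.
by rewrite size_map leq_addr.
Qed.

Lemma uniq4 (X : eqType) (a b c d : X) : a != b -> a != c -> a != d -> b != c ->
  b != d -> c != d -> uniq [:: a; b; c; d].
Proof. by move=> ab ac ad bc bd cd; rewrite /= !inE !negb_or ab ac ad bc bd cd. Qed.

Lemma size_undup_cat_sub (s1 a b : seq nat) : {subset s1 <= a ++ b} ->
  size (undup s1) <= size a + size (undup b).
Proof.
move=> H.
have H' : {subset s1 <= a ++ undup b}.
  by move=> x /H; rewrite !mem_cat mem_undup.
by apply: leq_trans (size_undup_sub H') _; rewrite size_cat.
Qed.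

Lemma CN_witness (T : finType) (e : rel T) (C : T -> T -> nat) v c :
  c \in CN e C v -> exists x, e v x /\ C v x = c.
Proof. by rewrite mem_CN => /existsP[x /andP[H /eqP E]]; exists x. Qed.

Lemma two_in (s : seq nat) : uniq s -> 2 <= size s ->
  exists c1 c2, [/\ c1 \in s, c2 \in s & c1 != c2].
Proof.
case: s => [|c1 [|c2 s]] //= /andP[H _] _.
exists c1, c2; split; rewrite ?inE ?eqxx ?orbT //.
by apply: contra H => /eqP ->; rewrite inE eqxx.
Qed.

Lemma one_in (s : seq nat) : 1 <= size s -> exists c, c \in s.
Proof. by case: s => [|c s] //= _; exists c; rewrite inE eqxx. Qed.

Definition goodv (T : finType) (e : rel T) (C : T -> T -> nat) (m : nat) (a : T) : bool :=
  #|T| - 1 - m <= 2 * size (CN e C a).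

Lemma partA (T : finType) (e : rel T) (C : T -> T -> nat) (m : nat) u g :
  simple_graph e -> edge_coloring e C ->
  (forall a b c d, ~~ rc4 e C a b c d) ->
  105 * m + 81 <= #|T| ->
  (forall a b, a != b -> #|T| - 1 - m <= CN_union_card e C a b) ->
  (forall a b, a != b -> goodv e C m a || goodv e C m b) ->
  goodv e C m u ->
  m + 5 <= #|[set x | e u x && (C u x == g)]| -> False.
Proof.
move=> Hs Hc NR Hn HU Hgood gu HS.
set S := [set x | e u x && (C u x == g)].
have [Hirr Hsym] := Hs.
have [v [uv vg gv]] : exists v, [/\ e u v, C u v != g & goodv e C m v].
  pose s := filter (fun c => c \notin [:: g]) (CN e C u).
  have Us : uniq s by apply: filter_uniq; apply: undup_uniq.
  have Hsz : 2 <= size s.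
    have := size_filter_notin [:: g] (undup_uniq _ : uniq (CN e C u)).
    rewrite -/s /=.
    move: gu; rewrite /goodv => gu. lia.
  have [c1 [c2 [c1in c2in c12]]] := two_in Us Hsz.
  move: c1in c2in; rewrite !mem_filter !inE => /andP[c1g /CN_witness[v1 [uv1 E1]]].
  move=> /andP[c2g /CN_witness[v2 [uv2 E2]]].
  have v12 : v1 != v2 by apply: contra c12 => /eqP E; rewrite -E1 -E2 E.
  case/orP: (Hgood _ _ v12) => Hg.
    by exists v1; rewrite E1.
  by exists v2; rewrite E2.
have [w [vw wc1 wc2]] : exists w, [/\ e v w, C v w != C v u & C v w != g].
  pose s := filter (fun c => c \notin [:: C v u; g]) (CN e C v).
  have Hsz : 1 <= size s.
    have := size_filter_notin [:: C v u; g] (undup_uniq _ : uniq (CN e C v)).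
    rewrite -/s /=.
    move: gv; rewrite /goodv => gv. lia.
  have [c cin] := one_in Hsz.
  move: cin; rewrite mem_filter !inE negb_or => /andP[/andP[c1 c2] /CN_witness[w [vw E]]].
  by exists w; rewrite E.
have vu : e v u by rewrite Hsym.
have wv : e w v by rewrite Hsym.
rewrite -(Hc _ _ uv) in wc1.
rewrite (Hc _ _ vw) in wc1 wc2.
have uw : u != w by apply: contra wc1 => /eqP ->.
have Hcl : forall x, x \in S -> x != w -> e w x -> C w x \in [:: g; C u v; C w v].
  move=> x; rewrite inE => /andP[ux /eqP ug] xw wx.
  apply: (contraR _ (NR u x w v)).
  rewrite !inE !negb_or => /and3P[n1 n2 n3].
  have xv : x != v by apply: contra vg => /eqP <-; rewrite ug.
  have xw2 : e x w by rewrite Hsym.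
  rewrite /rc4 ux xw2 wv vu /=.
  rewrite -(Hc _ _ wx) -(Hc _ _ uv) ug.
  have ux' := edge_neq Hs ux. have uv' := edge_neq Hs uv. have wv' := edge_neq Hs wv.
  have wx' := edge_neq Hs wx.
  apply/andP; split.
    by apply: uniq4 => //; rewrite eq_sym.
  by apply: uniq4 => //; rewrite eq_sym.
set Y := [set x | [&& x \notin S, x != u & x != w]].
have Hflat : forall x c, x \in Y -> c \in col e C u w x ->
    c \in [:: C u w; g] ++ flatten (map (col e C u w) (enum Y)).
  move=> x c xY cin; rewrite mem_cat; apply/orP; right.
  by apply/flattenP; exists (col e C u w x) => //; apply: map_f; rewrite mem_enum.
have vY : v \in Y.
  rewrite inE (edge_neq Hs vw) andbT eq_sym (edge_neq Hs uv) andbT.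
  by rewrite inE uv /= vg.
have Hsub : {subset CN e C u ++ CN e C w <= [:: C u w; g] ++ flatten (map (col e C u w) (enum Y))}.
  move=> c; rewrite mem_cat => /orP[] /CN_witness[x [Hx <-]].
    case: (eqVneq x w) => [->|xw]; first by rewrite ?mem_cat !inE eqxx.
    case: (boolP (x \in S)) => xS.
      by move: xS; rewrite inE Hx => /eqP ->; rewrite ?mem_cat !inE eqxx orbT.
    apply: (Hflat x); last by rewrite /col Hx ?mem_cat inE eqxx.
    by rewrite inE xS xw andbT eq_sym (edge_neq Hs Hx).
  case: (eqVneq x u) => [E|xu].
    by move: Hx; rewrite E => Hx; rewrite (Hc _ _ Hx) mem_cat !inE eqxx.
  case: (boolP (x \in S)) => xS.
    have xw : x != w by rewrite eq_sym (edge_neq Hs Hx).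
    move: (Hcl x xS xw Hx); rewrite inE => /orP[/eqP->|].
      by rewrite ?mem_cat !inE eqxx orbT.
    rewrite inE => /orP[/eqP->|]; last rewrite inE => /eqP->.
    - by apply: (Hflat v) => //; rewrite /col uv ?mem_cat inE eqxx.
    - by apply: (Hflat v) => //; rewrite /col uv wv ?mem_cat !inE eqxx orbT.
  apply: (Hflat x); last by rewrite /col Hx mem_cat !inE eqxx orbT.
  by rewrite inE xS xu /= eq_sym (edge_neq Hs Hx).
have H1 := size_undup_cat_sub Hsub.
have H2 := UB (enum Y) Hs Hc NR uw.
rewrite -cardE in H2.
have H3 : #|Y| + #|S| + 1 <= #|T|.
  have uS : u \notin S by rewrite inE Hirr.
  have : #|Y| <= #|~: (u |: S)|.
    apply: subset_leq_card; apply/subsetP => x; rewrite !inE.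
    by case/and3P => xS xu _; rewrite negb_or xu.
  have := cardsC (u |: S); rewrite cardsU1 uS. lia.
have := HU u w uw; rewrite /CN_union_card.
move: H1 H2 H3 HS; rewrite -/S /=. lia.
Qed.

Lemma sum_bool_card (X : finType) (P : pred X) :
  \sum_(x : X) (P x : nat) = #|[set x | P x]|.
Proof.
rewrite -sum1_card [RHS]big_mkcond /=; apply: eq_bigr => x _.
by rewrite inE; case: (P x).
Qed.

Lemma card_U4 (X : finType) (A B D E : {set X}) :
  #|A :|: B :|: D :|: E| <= #|A| + #|B| + #|D| + #|E|.
Proof.
have H1 := cardsU (A :|: B :|: D) E. have H2 := cardsU (A :|: B) D.
have H3 := cardsU A B. lia.
Qed.

Lemma NL_bound (T : finType) (e : rel T) (C : T -> T -> nat) u w K :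
  simple_graph e -> edge_coloring e C ->
  (forall a b c d, ~~ rc4 e C a b c d) -> u != w ->
  (forall g, #|[set x | e u x && (C u x == g)]| <= K) ->
  (forall g, #|[set x | e w x && (C w x == g)]| <= K) ->
  #|[set x | [&& e u x, e w x & C u x != C w x]]| <= 4 * K.
Proof.
move=> Hs Hc NR uw Ku Kw.
set N := [set x | _].
case: (set_0Vmem N) => [->|[x0 x0in]]; first by rewrite cards0.
move: (x0in); rewrite inE => /and3P[ux0 wx0 n0].
pose Sv v g := [set x | e v x && (C v x == g)].
have Hsub : N \subset Sv u (C u x0) :|: Sv u (C w x0) :|: Sv w (C u x0) :|: Sv w (C w x0).
  apply/subsetP => x; rewrite inE => /and3P[ux wx nx].
  case: (eqVneq x0 x) => [<-|x0x]; first by rewrite !inE ux0 eqxx.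
  have := KI Hs Hc NR uw ux0 wx0 ux wx x0x n0 nx.
  by rewrite !inE ux wx ![_ == C _ x0]eq_sym /= => /or4P[->|->|->|->]; rewrite ?orbT.
have := subset_leq_card Hsub.
have := card_U4 (Sv u (C u x0)) (Sv u (C w x0)) (Sv w (C u x0)) (Sv w (C w x0)).
have := Ku (C u x0). have := Ku (C w x0). have := Kw (C u x0). have := Kw (C w x0).
rewrite /Sv. lia.
Qed.

Lemma arith1 c : 2 * c * (2 * c - 2) = 4 * (c * (c - 1)).
Proof. nia. Qed.

Lemma arith2 n k : 4 * (n * (n.-1 * (4 * k))) = n.-1 * (16 * k * n).
Proof. nia. Qed.

Lemma arith_final n m : 105 * m + 81 <= n ->
  (n - 1 - m - 2) * (n - 1 - m - 4) <= 16 * (m + 4) * n -> False.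
Proof. move=> H1 H2. nia. Qed.

Lemma partB (T : finType) (e : rel T) (C : T -> T -> nat) (m : nat) b0 :
  simple_graph e -> edge_coloring e C ->
  (forall a b c d, ~~ rc4 e C a b c d) ->
  105 * m + 81 <= #|T| ->
  (forall y, goodv e C m y || (y == b0)) ->
  (forall u g, goodv e C m u -> #|[set x | e u x && (C u x == g)]| <= m + 4) -> False.
Proof.
move=> Hs Hc NR Hn Hb0 HK.
have [Hirr Hsym] := Hs.
pose Q x u w : bool := [&& goodv e C m u, goodv e C m w, e u x, e w x & C u x != C w x].
pose Tot := \sum_(x : T) \sum_(u : T) \sum_(w : T) (Q x u w : nat).
have Hpair : forall u w, \sum_(x : T) (Q x u w : nat) <= (u != w) * (4 * (m + 4)).
  move=> u w; rewrite sum_bool_card.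
  case: (eqVneq u w) => [<-|uw].
    rewrite leqn0 cards_eq0; apply/eqP/setP => x; rewrite !inE.
    by rewrite /Q eqxx !andbF.
  rewrite mul1n.
  case gu: (goodv e C m u); case gw: (goodv e C m w); first last.
  - suff -> : [set x | Q x u w] = set0 by rewrite cards0.
    by apply/setP => x; rewrite !inE /Q gu.
  - suff -> : [set x | Q x u w] = set0 by rewrite cards0.
    by apply/setP => x; rewrite !inE /Q gu.
  - suff -> : [set x | Q x u w] = set0 by rewrite cards0.
    by apply/setP => x; rewrite !inE /Q gw !andbF.
  apply: leq_trans (NL_bound Hs Hc NR uw (fun g => HK u g gu) (fun g => HK w g gw)).
  apply: subset_leq_card; apply/subsetP => x; rewrite !inE.
  by case/and5P => _ _ -> -> ->.
have Hup : Tot <= #|T| * (#|T|.-1 * (4 * (m + 4))).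
  rewrite /Tot exchange_big /=.
  have Hw : forall u, \sum_(w : T) (u != w) * (4 * (m + 4)) = #|T|.-1 * (4 * (m + 4)).
    move=> u; rewrite -(cardC1 u) -sum_nat_const [RHS]big_mkcond /=.
    by apply: eq_bigr => w _; rewrite /= eq_sym unfold_in; case: (w != u); rewrite ?mul1n ?mul0n.
  apply: leq_trans (_ : \sum_(u : T) (#|T|.-1 * (4 * (m + 4))) <= _); last first.
    by rewrite sum_nat_const.
  apply: leq_sum => u _; rewrite exchange_big /= -(Hw u).
  by apply: leq_sum => w _; apply: Hpair.
set L := #|T| - 1 - m.
have Hx : forall x, goodv e C m x * ((L - 2) * (L - 4)) <=
                    4 * \sum_(u : T) \sum_(w : T) (Q x u w : nat).
  move=> x; case gx: (goodv e C m x); last by rewrite mul0n.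
  rewrite mul1n.
  set A := [set u | goodv e C m u && e x u].
  set cs := undup (map (C x) (enum A)).
  have Hu : forall u, (if u \in A then size cs - 1 else 0) <= \sum_(w : T) (Q x u w : nat).
    move=> u; case uA: (u \in A) => //.
    rewrite sum_bool_card.
    move: (uA); rewrite inE => /andP[gu xu].
    have ux : e u x by rewrite Hsym.
    set B := [set w | Q x u w].
    have Hsub : {subset filter (fun c' => c' \notin [:: C x u]) cs <= map (C x) (enum B)}.
      move=> c'; rewrite mem_filter inE mem_undup => /andP[nc /mapP[w win Ec]].
      rewrite Ec; apply: map_f.
      move: win; rewrite mem_enum inE => /andP[gw xw].
      have wx : e w x by rewrite Hsym.
      rewrite mem_enum inE /Q gu gw ux wx /=.
      by rewrite -(Hc _ _ xu) -(Hc _ _ xw) eq_sym -Ec.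
    have := size_undup_sub Hsub.
    rewrite undup_id; last by apply: filter_uniq; apply: undup_uniq.
    rewrite size_map -cardE.
    have := size_filter_notin [:: C x u] (undup_uniq (map (C x) (enum A))).
    rewrite -/cs /=. lia.
  have HA : size cs <= #|A| by rewrite cardE; apply: leq_trans (size_undup _) _; rewrite size_map.
  have Hdc : size (CN e C x) <= 1 + size cs.
    have Hsub : {subset CN e C x <= [:: C x b0] ++ map (C x) (enum A)}.
      move=> c' /CN_witness[y [xy <-]].
      case/orP: (Hb0 y) => [gy|/eqP ->]; last by rewrite mem_cat inE eqxx.
      by rewrite mem_cat; apply/orP; right; apply: map_f; rewrite mem_enum inE gy xy.
    have := size_undup_cat_sub Hsub.
    by rewrite undup_id //; apply: undup_uniq.
  have Hs1 : \sum_(u : T) (if u \in A then size cs - 1 else 0) = #|A| * (size cs - 1).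
    by rewrite -big_mkcond /= sum_nat_const.
  have H1 : #|A| * (size cs - 1) <= \sum_(u : T) \sum_(w : T) (Q x u w : nat).
    by rewrite -Hs1; apply: leq_sum => u _; apply: Hu.
  move: gx; rewrite /goodv -/L => gx.
  have h1 : L - 2 <= 2 * size cs by lia.
  have h2 : L - 4 <= 2 * size cs - 2 by lia.
  have h3 := leq_mul h1 h2.
  have h4 : size cs * (size cs - 1) <= #|A| * (size cs - 1) by apply: leq_mul.
  apply: leq_trans h3 _; rewrite arith1 leq_mul2l /=.
  exact: leq_trans h4 H1.
have Hg : #|T|.-1 <= \sum_(x : T) (goodv e C m x : nat).
  rewrite sum_bool_card -(cardsC1 b0); apply: subset_leq_card; apply/subsetP => y.
  by rewrite !inE; case/orP: (Hb0 y) => [->|->].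
have Hlow : #|T|.-1 * ((L - 2) * (L - 4)) <= 4 * Tot.
  apply: leq_trans (_ : (\sum_(x : T) (goodv e C m x : nat)) * ((L - 2) * (L - 4)) <= _).
    by rewrite leq_mul2r Hg orbT.
  rewrite big_distrl /= /Tot big_distrr /=.
  by apply: leq_sum => x _; apply: Hx.
have Hfin : #|T|.-1 * ((L - 2) * (L - 4)) <= #|T|.-1 * (16 * (m + 4) * #|T|).
  apply: leq_trans Hlow _.
  apply: leq_trans (_ : 4 * (#|T| * (#|T|.-1 * (4 * (m + 4)))) <= _).
    by rewrite leq_mul2l Hup orbT.
  by rewrite arith2.
rewrite leq_pmul2l in Hfin; last by move: Hn; clear; lia.
by apply: (arith_final Hn); rewrite -/L.
Qed.

Lemma mainL (T : finType) (e : rel T) (C : T -> T -> nat) (m : nat) :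
  simple_graph e -> edge_coloring e C ->
  105 * m + 81 <= #|T| ->
  (forall a b, a != b -> #|T| - 1 - m <= CN_union_card e C a b) ->
  exists a b c d : T, uniq [:: a; b; c; d] /\ [&& e a b, e b c, e c d & e d a] /\
    uniq [:: C a b; C b c; C c d; C d a].
Proof.
move=> Hs Hc Hn HU.
case: (boolP [exists a, exists b, exists c, exists d, rc4 e C a b c d]).
  case/existsP => a /existsP[b /existsP[c /existsP[d]]].
  by rewrite /rc4 => /and3P[H1 H2 H3]; exists a, b, c, d.
move=> Hno; exfalso.
have NR : forall a b c d, ~~ rc4 e C a b c d.
  move=> a b c d; apply: contra Hno => H.
  by apply/existsP; exists a; apply/existsP; exists b; apply/existsP; exists c; apply/existsP; exists d.
have Hgood : forall a b, a != b -> goodv e C m a || goodv e C m b.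
  move=> a b ab; have := HU a b ab; rewrite /CN_union_card /goodv.
  have := size_undup (CN e C a ++ CN e C b); rewrite size_cat.
  case: (leqP (#|T| - 1 - m) (2 * size (CN e C a))) => //=.
  case: (leqP (#|T| - 1 - m) (2 * size (CN e C b))) => //=.
  lia.
have [b0 Hb0] : exists b0, forall y, goodv e C m y || (y == b0).
  case: (pickP (fun y => ~~ goodv e C m y)) => [b Hb | Hall].
    exists b => y; case: (eqVneq y b) => [->|yb]; first by rewrite orbT.
    by case/orP: (Hgood _ _ yb) => [->|Hg] //; rewrite Hg in Hb.
  have : 0 < #|T| by move: Hn; clear; lia.
  case/card_gt0P => y0 _; exists y0 => y.
  by have := Hall y; rewrite /= => /negbFE ->.
case: (boolP [exists u, exists x, goodv e C m u && (m + 5 <= #|[set y | e u y && (C u y == C u x)]|)]).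
  case/existsP => u /existsP[x /andP[gu Hbig]].
  exact: (partA Hs Hc NR Hn HU Hgood gu Hbig).
move=> Hsmall.
apply: (partB Hs Hc NR Hn Hb0) => u g gu.
case: (set_0Vmem [set x | e u x && (C u x == g)]) => [->|[x xin]]; first by rewrite cards0.
move: (xin); rewrite inE => /andP[_ /eqP E].
rewrite -E leqNgt; apply: contra Hsmall => H.
by apply/existsP; exists u; apply/existsP; exists x; rewrite gu /= addnS.
Qed.

Definition pcol (T : finType) (C : T -> T -> nat) (P : {set T}) : nat :=
  match [pick p in P] with
  | Some p => match [pick q in P :\ p] with Some q => C p q | None => 0 end
  | None => 0
  end.

Lemma pcolE (T : finType) (e : rel T) (C : T -> T -> nat) a x :
  simple_graph e -> edge_coloring e C -> e a x -> pcol C [set a; x] = C a x.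
Proof.
move=> Hs Hc ax; have ax' := edge_neq Hs ax.
rewrite /pcol; case: pickP => [p|]; last first.
  by move=> H; have := H a; rewrite !inE eqxx.
rewrite !inE => /orP[] /eqP ->; case: pickP => [q|].
- rewrite !inE => /andP[qa /orP[/eqP E|/eqP ->]] //.
  by rewrite E eqxx in qa.
- by move=> H; have := H x; rewrite /= !inE eqxx orbT andbT [x == a]eq_sym ax'.
- rewrite !inE => /andP[qx /orP[/eqP ->|/eqP E]]; first by rewrite (Hc _ _ ax).
  by rewrite E eqxx in qx.
- by move=> H; have := H a; rewrite /= !inE eqxx /= ax'.
Qed.

Lemma step (T : finType) (e : rel T) (C : T -> T -> nat) (k : nat)
  (F : {set {set {set T}}}) :
  simple_graph e -> edge_coloring e C -> 0 < k -> 105 * k - 24 <= #|T| ->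
  (forall u v : T, u != v -> #|T| - 1 <= CN_union_card e C u v) ->
  #|F| < k ->
  exists S, S \notin F /\ rainbow_C4 e C S.
Proof.
move=> Hs Hc k0 Hn HU HF.
have [Hirr Hsym] := Hs.
set Forb := [set (odflt set0 [pick P in (S : {set {set T}})] : {set T}) | S in F].
pose e' := fun u v => e u v && ([set u; v] \notin Forb).
have Hs' : simple_graph e'.
  split; first by move=> u; rewrite /e' Hirr.
  move=> u v; rewrite /e' Hsym.
  by have -> : [set u; v] = [set v; u] by apply/setP => z; rewrite !inE orbC.
have Hc' : edge_coloring e' C by move=> u v /andP[H _]; apply: Hc.
have HFo : #|Forb| <= #|F| by apply: leq_imset_card.
have HU' : forall a b, a != b -> #|T| - 1 - #|Forb| <= CN_union_card e' C a b.
  move=> a b ab; have := HU a b ab; rewrite /CN_union_card.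
  have Hsub : {subset CN e C a ++ CN e C b <=
                [seq pcol C P | P <- enum Forb] ++ (CN e' C a ++ CN e' C b)}.
    have Hv : forall v c, c \in CN e C v ->
        c \in [seq pcol C P | P <- enum Forb] ++ (CN e' C a ++ CN e' C b) \/ c \in CN e' C v.
      move=> v c /CN_witness[x [vx <-]].
      case: (boolP ([set v; x] \in Forb)) => Hin.
        left; rewrite mem_cat; apply/orP; left.
        rewrite -(pcolE Hs Hc vx); apply: map_f; by rewrite mem_enum.
      right; rewrite mem_CN; apply/existsP; exists x; by rewrite /e' vx Hin eqxx.
    move=> c; rewrite mem_cat => /orP[] Hc1.
      case: (Hv _ _ Hc1) => // H; by rewrite !mem_cat H orbT.
    case: (Hv _ _ Hc1) => // H; by rewrite !mem_cat H !orbT.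
  have := size_undup_cat_sub Hsub; rewrite size_map -cardE. lia.
have Hm : 105 * #|Forb| + 81 <= #|T| by move: Hn k0 HF HFo; clear; lia.
have [a [b [c [d [Hu [He Hcol]]]]]] := mainL Hs' Hc' Hm HU'.
exists (C4_edges a b c d); split; last first.
  exists a, b, c, d; split => //; split => //.
  by move: He; rewrite /e' => /and4P[/andP[-> _] /andP[-> _] /andP[-> _] /andP[-> _]].
apply/negP => SF.
have : odflt set0 [pick P in C4_edges a b c d] \in Forb by apply: imset_f.
case: pickP => [P PS|H] /=; last first.
  by have := H [set a; b]; rewrite /C4_edges !inE eqxx.
move: He; rewrite /e' => /and4P[/andP[_ h1] /andP[_ h2] /andP[_ h3] /andP[_ h4]].
move: PS; rewrite /C4_edges !inE => /orP[/orP[/orP[]|]|] /eqP ->; by rewrite ?(negbTE h1) ?(negbTE h2) ?(negbTE h3) ?(negbTE h4).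
Qed.

Unset Implicit Arguments.

Theorem theorem6 (T : finType) (e : rel T) (C : T -> T -> nat) (k : nat) :
  simple_graph e -> edge_coloring e C ->
  0 < k ->
  105 * k - 24 <= #|T| ->
  (forall u v : T, u != v -> #|T| - 1 <= CN_union_card e C u v) ->
  exists F : {set {set {set T}}},
    #|F| = k /\ (forall S, S \in F -> rainbow_C4 e C S).
Proof.
move=> Hs Hc k0 Hn HU.
suff : forall j, j <= k -> exists F : {set {set {set T}}},
    #|F| = j /\ (forall S, S \in F -> rainbow_C4 e C S) by apply.
elim=> [|j IH] jk.
  by exists set0; split; [rewrite cards0 | move=> S; rewrite inE].
have [F [HF HR]] := IH (ltnW jk).
have HFk : #|F| < k by rewrite HF.
have [S [SF HS]] := step Hs Hc k0 Hn HU HFk.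
exists (S |: F); split; first by rewrite cardsU1 SF HF.
by move=> S'; rewrite !inE => /orP[/eqP ->|/HR].
Qed.
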